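(* Under the hypotheses of the striction construction (the ruling distribution of $\sigma$ has degree $d>0$ at every $t$, and $\rho_{t}X_{m-d}(t),\dotsc,\rho_{t}X_{m-1}(t)$ are linearly independent for every $t$), the differential of $\sigma$ has rank exactly $m-1$ at every singular point of $\sigma$.
   Context: Ruled submanifold: given an open interval $I$, a smooth unit-speed curve $\gamma\colon I\to\mathbb{R}^{m+n}$ and smooth vector fields $X_{1},\dotsc,X_{m-1}$ along $\gamma$ that are orthonormal at each $t$, define $\sigma(t,u^{1},\dotsc,u^{m-1})=\gamma(t)+\sum_{j=1}^{m-1}u^{j}X_{j}(t)$ on $I\times\mathbb{R}^{m-1}$. A point is singular if $d\sigma$ is not injective there. The ruling distribution is $\mathcal{D}_{t}=\operatorname{Span}(X_{j}(t))_{j=1}^{m-1}$, and $\rho_{t}X_{j}(t)=\pi^{\perp}\dot X_{j}(t)$, where $\pi^{\perp}$ is orthogonal projection onto $\mathcal{D}_{t}^{\perp}$. The degree of $\mathcal{D}$ at $t$ is the rank of the linear map $\rho_{t}\colon\mathcal{D}_{t}\to\mathcal{D}_{t}^{\perp}$, $\sum_j c_jX_j(t)\mapsto\sum_j c_j\rho_tX_j(t)$. *)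

(* Defs.v *)
From HB Require Import structures.
From mathcomp Require Import all_boot all_order all_algebra.
From mathcomp Require Import all_classical all_reals all_analysis.
Set Implicit Arguments. Unset Strict Implicit. Unset Printing Implicit Defensive.
Import Order.TTheory GRing.Theory Num.Theory.
Import numFieldNormedType.Exports.
Local Open Scope classical_set_scope.
Local Open Scope ring_scope.

Section RuledDefs.
Variable R : realType.

Definition dotv N (u v : 'rV[R]_N) : R := (u *m v^T) 0 0.

Definition smooth_on N (I : set R) (f : R -> 'rV[R]_N) : Prop :=
  forall k t, I t -> derivable (derive1n k f) t 1.

Definition unit_speed_on N (I : set R) (g : R -> 'rV[R]_N) : Prop :=
  forall t, I t -> dotv (derive1 g t) (derive1 g t) = 1.

Definition orthonormal_on N k (I : set R) (X : 'I_k -> R -> 'rV[R]_N) : Prop :=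
  forall t, I t -> forall i j, dotv (X i t) (X j t) = (i == j)%:R.

(* sigma(t,u) = gamma(t) + sum_j u^j X_j(t); a point of I x R^(m-1) is the row
   vector (t, u) in 'rV_(1 + (m-1)). *)
Definition ruled_map N k (g : R -> 'rV[R]_N) (X : 'I_k -> R -> 'rV[R]_N)
  (p : 'rV[R]_(1 + k)) : 'rV[R]_N :=
  g (lsubmx p 0 0) + \sum_(j < k) (rsubmx p) 0 j *: X j (lsubmx p 0 0).

Definition proj_perp N k (X : 'I_k -> R -> 'rV[R]_N) (t : R) (v : 'rV[R]_N) :=
  v - \sum_(l < k) dotv v (X l t) *: X l t.

Definition rho N k (X : 'I_k -> R -> 'rV[R]_N) (t : R) (j : 'I_k) : 'rV[R]_N :=
  proj_perp X t (derive1 (X j) t).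

(* degree of D at t: rank of rho_t : D_t -> D_t^perp, i.e. the dimension of the
   span of the images rho_t X_j(t) of the orthonormal basis (X_j(t))_j *)
Definition ruling_degree N k (X : 'I_k -> R -> 'rV[R]_N) (t : R) : nat :=
  \rank (\matrix_(j < k) rho X t j).

End RuledDefs.

(* Main.v *)
Require Import Defs.
From HB Require Import structures.
From mathcomp Require Import all_boot all_order all_algebra.
From mathcomp Require Import all_classical all_reals all_analysis.
Import Order.TTheory GRing.Theory Num.Theory.
Import numFieldNormedType.Exports.
Local Open Scope classical_set_scope.
Local Open Scope ring_scope.

Lemma ruled_shift (R : realType) N k (g : R -> 'rV[R]_N) (X : 'I_k -> R -> 'rV[R]_N)
  (p : 'rV[R]_(1 + k)) (j : 'I_k) (h : R) :
  ruled_map g X (h *: delta_mx 0 (rshift 1 j) + p) =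
  ruled_map g X p + h *: X j (lsubmx p 0 0).
Proof.
have hl : lsubmx (h *: delta_mx 0 (rshift 1 j) + p) = lsubmx p.
  apply/matrixP => a b; rewrite !mxE.
  by rewrite (_ : lshift k b == rshift 1 j = false) ?andbF ?mulr0 ?add0r //;
    apply/negbTE/eqP => /(congr1 val) /=; have := ltn_ord b; case: (nat_of_ord b) => //.
rewrite /ruled_map hl -addrA; congr (_ + _).
rewrite (bigD1 j) //= [in RHS](bigD1 j) //=.
set t := lsubmx p 0 0.
have E1 : \sum_(i < k | i != j) rsubmx (h *: delta_mx 0 (rshift 1 j) + p) 0 i *: X i t
   = \sum_(i < k | i != j) rsubmx p 0 i *: X i t.
  apply: eq_bigr => i ij; rewrite !mxE.
  rewrite (_ : (rshift 1 i == rshift 1 j) = false) ?andbF ?mulr0 ?add0r //.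
  by apply/negbTE; apply: contra ij => /eqP /rshift_inj ->.
have E2 : rsubmx (h *: delta_mx 0 (rshift 1 j) + p) 0 j *: X j t
   = rsubmx p 0 j *: X j t + h *: X j t.
  by rewrite !mxE !eqxx /= mulr1 scalerDl addrC.
by rewrite E1 E2 addrAC -addrA.
Qed.

Lemma ruled_dir (R : realType) N k (g : R -> 'rV[R]_N) (X : 'I_k -> R -> 'rV[R]_N)
  (p : 'rV[R]_(1 + k)) (j : 'I_k) :
  'D_(delta_mx 0 (rshift 1 j)) (ruled_map g X) p = X j (lsubmx p 0 0).
Proof.
rewrite /derive; apply: cvg_lim => //.
apply: cvg_near_cst; near=> h.
rewrite /= /shift ruled_shift addrAC subrr add0r scalerA mulVf ?scale1r //.
near: h; exact: nbhs_dnbhs_neq.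
Unshelve. all: by end_near.
Qed.

Lemma diff_scal (R : realType) M N (h : 'rV[R]_M -> R) (F : 'rV[R]_M -> 'rV[R]_N) p :
  differentiable h p -> differentiable F p ->
  differentiable (fun q => h q *: F q) p.
Proof.
move=> dh dF.
have -> : (fun q => h q *: F q) =
   \sum_(c < N) (fun q => (h q * F q 0 c) *: (delta_mx 0 c : 'rV[R]_N)).
  rewrite fct_sumE; apply/funext => q.
  rewrite {1}(row_sum_delta (F q)) scaler_sumr; apply: eq_bigr => c _.
  by rewrite scalerA.
apply: differentiable_sum => c.
apply: (differentiableZl (k := fun q => h q * F q 0 c)).
apply: (differentiableM (f := h) (g := fun q => F q 0 c)) => //.
apply: (differentiable_comp (g := fun A : 'rV[R]_N => A 0 c)) => //.
exact: differentiable_coord.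
Qed.

Lemma ruled_diff (R : realType) N k (g : R -> 'rV[R]_N) (X : 'I_k -> R -> 'rV[R]_N)
  (p : 'rV[R]_(1 + k)) :
  differentiable g (lsubmx p 0 0) -> (forall j, differentiable (X j) (lsubmx p 0 0)) ->
  differentiable (ruled_map g X) p.
Proof.
move=> dg dX.
have dphi : differentiable (fun q : 'rV[R]_(1 + k) => lsubmx q 0 0) p.
  apply: (differentiable_comp (f := lsubmx) (g := fun A : 'rV[R]_1 => A 0 0)).
    exact: differentiable_lsubmx.
  exact: differentiable_coord.
have -> : ruled_map g X = (g \o (fun q : 'rV[R]_(1 + k) => lsubmx q 0 0)) +
   \sum_(j < k) (fun q => rsubmx q 0 j *: X j (lsubmx q 0 0)).
  by rewrite fct_sumE; apply/funext => q.
apply: differentiableD.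
  exact: differentiable_comp.
apply: differentiable_sum => j.
apply: diff_scal.
  apply: (differentiable_comp (f := rsubmx) (g := fun A : 'rV[R]_k => A 0 j)).
    exact: differentiable_rsubmx.
  exact: differentiable_coord.
exact: (differentiable_comp (f := fun q : 'rV[R]_(1 + k) => lsubmx q 0 0) (g := X j)).
Qed.

Theorem mainTheorem5 (R : realType) (m n d : nat) (I : set R)
  (gam : R -> 'rV[R]_(m + n)) (X : 'I_(m - 1) -> R -> 'rV[R]_(m + n)) :
  open I -> is_interval I ->
  smooth_on I gam -> unit_speed_on I gam ->
  (forall j, smooth_on I (X j)) -> orthonormal_on I X ->
  (0 < d)%N ->
  (forall t, I t -> ruling_degree X t = d) ->
  (forall t, I t -> forall c : 'I_(m - 1) -> R,
      (forall j : 'I_(m - 1), (j < m - 1 - d)%N -> c j = 0) ->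
      \sum_(j < m - 1) c j *: rho X t j = 0 -> forall j, c j = 0) ->
  forall p : 'rV[R]_(1 + (m - 1)), I (lsubmx p 0 0) ->
    ~ injective ('d (ruled_map gam X) p) ->
    \rank (lin1_mx ('d (ruled_map gam X) p)) = (m - 1)%N.
Proof.
move=> _ _ sg _ sX onX _ _ _ p Ip ninj.
move: (m - 1)%N X onX sX p Ip ninj => k X onX sX p Ip ninj.
set t := lsubmx p 0 0 in Ip *.
have dF : differentiable (ruled_map gam X) p.
  apply: ruled_diff.
    by apply/derivable1_diffP; exact: (sg 0%N t Ip).
  by move=> j; apply/derivable1_diffP; exact: (sX j 0%N t Ip).
set D := 'd (ruled_map gam X) p.
have rows : forall j, D (delta_mx 0 (rshift 1 j)) = X j t.
  by move=> j; rewrite /D -deriveE // ruled_dir.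
set A := lin1_mx D.
set B := \matrix_(j < k) X j t.
have BA : B = rowsub (@rshift 1 k) A.
  by apply/matrixP => i c; rewrite !mxE rows.
have BB : B *m B^T = 1%:M.
  apply/matrixP => i j; rewrite !mxE.
  rewrite -(onX t Ip i j) /dotv !mxE; apply: eq_bigr => c _; rewrite !mxE.
  done.
have lo : (k <= \rank A)%N.
  apply: (@leq_trans (\rank B)).
    by rewrite -{1}(mxrank1 R k) -BB mxrankM_maxl.
  by rewrite BA rowsubE mxrankM_maxr.
have hi : \rank A != (1 + k)%N.
  apply/negP => /eqP rA.
  have rf : row_free A by rewrite /row_free rA.
  have [x [x0 Dx]] : exists x, x != 0 /\ D x = 0.
    apply: contrapT => nex; apply: ninj => u v Duv.
    apply/subr0_eq; have [//|nz] := eqVneq (u - v) 0; exfalso; apply: nex.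
    exists (u - v); split => //.
    have -> : D (u - v) = D u - D v by exact: raddfB.
    by rewrite /D Duv subrr.
  move: x0; rewrite (@row_free_inj _ _ _ _ A rf x 0) ?eqxx //.
  by rewrite mul_rV_lin1 Dx mul0mx.
have := rank_leq_row A.
move: lo hi; move: (\rank A) => r h1 h2 h3.
have : (r < 1 + k)%N by rewrite ltn_neqAle h2 h3.
by rewrite add1n ltnS => h4; apply/eqP; rewrite eqn_leq h1 h4.
Qed.
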